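(* Let $\mathcal C$ be a category, $I:\mathcal B\to\mathcal C$ the inclusion of a full subcategory with a left adjoint $S:\mathcal C\to\mathcal B$, with unit $\alpha:1_{\mathcal C}\to IS$ and counit $\beta:SI\xrightarrow{\cong}1_{\mathcal B}$, and $J:\mathcal D\to\mathcal C$ the inclusion of a full subcategory with a right adjoint $T:\mathcal C\to\mathcal D$, with unit $\delta:1_{\mathcal D}\xrightarrow{\cong}TJ$ and counit $\epsilon:JT\to1_{\mathcal C}$. Suppose that the natural transformations $IS\epsilon:ISJT\to IS$ and $JT\alpha:JT\to JTIS$ are isomorphisms. Then the endofunctor $JT:\mathcal C\to\mathcal C$ is left adjoint to the endofunctor $IS:\mathcal C\to\mathcal C$. *)

(* Defs.v *)
(* Hom-sets are types, equality of morphisms is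
   Leibniz equality. *)
Set Implicit Arguments.
Unset Strict Implicit.

Record Category := {
  Ob :> Type;
  Hom : Ob -> Ob -> Type;
  idm : forall x, Hom x x;
  comp : forall x y z, Hom y z -> Hom x y -> Hom x z;
  comp_id_l : forall x y (f : Hom x y), comp (idm y) f = f;
  comp_id_r : forall x y (f : Hom x y), comp f (idm x) = f;
  comp_assoc : forall x y z w (f : Hom x y) (g : Hom y z) (h : Hom z w),
      comp h (comp g f) = comp (comp h g) f
}.
Arguments Hom {c} _ _.
Arguments idm {c} _.
Arguments comp {c x y z} _ _.

Record Functor (C D : Category) := {
  fobj :> C -> D;
  fmap : forall x y, Hom x y -> Hom (fobj x) (fobj y);
  fmap_id : forall x, fmap (idm x) = idm (fobj x);
  fmap_comp : forall x y z (f : Hom x y) (g : Hom y z),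
      fmap (comp g f) = comp (fmap g) (fmap f)
}.
Arguments fmap {C D} f {x y} _ : rename.

Definition FunctorComp (C D E : Category) (G : Functor D E) (F : Functor C D)
  : Functor C E.
Proof.
  refine {| fobj := fun x => G (F x);
            fmap := fun x y f => fmap G (fmap F f) |}.
  - intros x. rewrite !fmap_id. reflexivity.
  - intros x y z f g. rewrite !fmap_comp. reflexivity.
Defined.

Definition is_iso (C : Category) (x y : C) (f : Hom x y) : Prop :=
  exists g : Hom y x, comp g f = idm x /\ comp f g = idm y.

Definition FullSub (C : Category) (P : C -> Prop) : Category.
Proof.
  refine {| Ob := { x : C | P x };
            Hom := fun a b => @Hom C (proj1_sig a) (proj1_sig b);
            idm := fun a => idm (proj1_sig a);
            comp := fun a b c g f => comp g f |}.
  - intros; apply comp_id_l.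
  - intros; apply comp_id_r.
  - intros; apply comp_assoc.
Defined.

Arguments FullSub : clear implicits.

Definition Incl (C : Category) (P : C -> Prop) : Functor (FullSub C P) C.
Proof.
  refine {| fobj := fun a : FullSub C P => proj1_sig a;
            fmap := fun (a b : FullSub C P) (f : Hom a b) => f |}.
  - reflexivity.
  - reflexivity.
Defined.

Arguments Incl : clear implicits.

Record Adjunction (C D : Category) (F : Functor C D) (G : Functor D C) := {
  unit : forall x : C, Hom x (G (F x));
  counit : forall y : D, Hom (F (G y)) y;
  unit_nat : forall x x' (f : Hom x x'),
      comp (unit x') f = comp (fmap G (fmap F f)) (unit x);
  counit_nat : forall y y' (g : Hom y y'),
      comp g (counit y) = comp (counit y') (fmap F (fmap G g));
  triangle_F : forall x : C, comp (counit (F x)) (fmap F (unit x)) = idm (F x);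
  triangle_G : forall y : D, comp (fmap G (counit y)) (unit (G y)) = idm (G y)
}.
Arguments unit {C D F G} _ _.
Arguments counit {C D F G} _ _.

(* Main.v *)
Require Import Defs.
From Stdlib Require Import ClassicalEpsilon.

Lemma iso_inv {C : Category} {x y : C} {f : Hom x y} :
  is_iso f -> {g : Hom y x | comp g f = idm x /\ comp f g = idm y}.
Proof. intro H. apply constructive_indefinite_description. exact H. Qed.

Lemma inv_nat {C : Category} {A B A' B' : C} {u : Hom A B} {ui : Hom B A}
  {u' : Hom A' B'} {ui' : Hom B' A'} {a : Hom A A'} {b : Hom B B'} :
  comp u ui = idm B -> comp ui' u' = idm A' -> comp u' a = comp b u ->
  comp ui' b = comp a ui.
Proof.
  intros H1 H2 H3.
  rewrite <- (comp_id_r (comp ui' b)), <- H1, comp_assoc, <- (comp_assoc u b ui').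
  rewrite <- H3, comp_assoc, H2, comp_id_l. reflexivity.
Qed.

Theorem theoremA3 (C : Category) (PB PD : C -> Prop)
  (S : Functor C (FullSub C PB)) (T : Functor C (FullSub C PD))
  (adjS : Adjunction S (Incl C PB))   (* S -| I, unit alpha, counit beta *)
  (adjT : Adjunction (Incl C PD) T)   (* J -| T, unit delta, counit epsilon *)
  (hISeps : forall X : C,
      is_iso (fmap (Incl C PB) (fmap S (counit adjT X))))
  (hJTalpha : forall X : C,
      is_iso (fmap (Incl C PD) (fmap T (unit adjS X)))) :
  inhabited (Adjunction (FunctorComp (Incl C PD) T) (FunctorComp (Incl C PB) S)).
Proof.
  pose (ui := fun X => proj1_sig (iso_inv (hISeps X))).
  pose (vi := fun X => proj1_sig (iso_inv (hJTalpha X))).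
  assert (ui1 : forall X, comp (ui X) (fmap S (counit adjT X)) = idm _)
    by (intro X; exact (proj1 (proj2_sig (iso_inv (hISeps X))))).
  assert (ui2 : forall X, comp (c:=C) (fmap S (counit adjT X)) (ui X) = idm _)
    by (intro X; exact (proj2 (proj2_sig (iso_inv (hISeps X))))).
  assert (vi1 : forall X, comp (vi X) (fmap T (unit adjS X)) = idm _)
    by (intro X; exact (proj1 (proj2_sig (iso_inv (hJTalpha X))))).
  assert (vi2 : forall X, comp (c:=C) (fmap T (unit adjS X)) (vi X) = idm _)
    by (intro X; exact (proj2 (proj2_sig (iso_inv (hJTalpha X))))).
  clearbody ui vi.
  cbn in *.
  pose proof (unit_nat adjS) as aN. pose proof (counit_nat adjS) as bN.
  pose proof (triangle_F adjS) as sF. pose proof (triangle_G adjS) as sG.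
  pose proof (unit_nat adjT) as dN. pose proof (counit_nat adjT) as eN.
  pose proof (triangle_F adjT) as tF. pose proof (triangle_G adjT) as tG.
  cbn in *.
  assert (SC : forall x y z (f : Hom x y) (g : Hom y z),
    fmap S (comp g f) = comp (c:=C) (fmap S g) (fmap S f)) by (intros; apply fmap_comp).
  assert (TC : forall x y z (f : Hom x y) (g : Hom y z),
    fmap T (comp g f) = comp (c:=C) (fmap T g) (fmap T f)) by (intros; apply fmap_comp).
  refine (inhabits (@Build_Adjunction C C (FunctorComp (Incl C PD) T) (FunctorComp (Incl C PB) S)
      (fun X => comp (ui X) (unit adjS X))
      (fun X => comp (counit adjT X) (vi X)) _ _ _ _)); cbn.
  - intros x x' f.
    rewrite <- comp_assoc, aN, !comp_assoc. f_equal.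
    apply (inv_nat (ui2 x) (ui1 x')).
    rewrite <- !SC. f_equal. symmetry; apply eN.
  - intros y y' g.
    rewrite <- !comp_assoc.
    replace (comp (vi y') (fmap T (fmap S g))) with (comp (c:=C) (fmap T g) (vi y)).
    + rewrite !comp_assoc, eN. reflexivity.
    + symmetry. apply (inv_nat (vi2 y) (vi1 y')).
      rewrite <- !TC. f_equal. apply aN.
  - intros x.
    assert (E1 : comp (comp (ui x) (unit adjS x)) (counit adjT x) = unit adjS (proj1_sig (T x))).
    { rewrite <- comp_assoc, aN, comp_assoc. cbn. rewrite ui1, comp_id_l. reflexivity. }
    assert (E2 : fmap T (comp (ui x) (unit adjS x)) =
       comp (c:=C) (fmap T (unit adjS (proj1_sig (T x)))) (unit adjT (T x))).
    { transitivity (comp (c:=C) (fmap T (comp (ui x) (unit adjS x)))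
           (comp (c:=C) (fmap T (counit adjT x)) (unit adjT (T x)))).
      - cbn. rewrite (tG x). symmetry. apply comp_id_r.
      - rewrite comp_assoc, <- TC, E1. reflexivity. }
    rewrite E2. cbn. rewrite <- comp_assoc, (comp_assoc _ _ (vi _)), vi1, comp_id_l. apply tF.
  - intros y.
    assert (E1 : comp (unit adjS y) (comp (counit adjT y) (vi y)) = counit adjT (proj1_sig (S y))).
    { rewrite comp_assoc. cbn. rewrite eN, <- comp_assoc. cbn. rewrite vi2, comp_id_r. reflexivity. }
    assert (E2 : fmap S (comp (counit adjT y) (vi y)) =
       comp (c:=C) (counit adjS (S y)) (fmap S (counit adjT (proj1_sig (S y))))).
    { transitivity (comp (c:=C) (comp (c:=C) (counit adjS (S y)) (fmap S (unit adjS y)))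
           (fmap S (comp (counit adjT y) (vi y)))).
      - cbn. rewrite (sF y). symmetry. apply comp_id_l.
      - rewrite <- comp_assoc, <- SC, E1. reflexivity. }
    cbn in E2 |- *. rewrite E2.
    rewrite <- !comp_assoc, (comp_assoc _ (ui _)), ui2, comp_id_l.
    apply sG.
Qed.
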